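(* Let $\mathcal{H}$ be a separable Hilbert space, let $\{f_n\}_{n=1}^\infty$ be a pseudo-frame in $\mathcal{H}$, and let $\{g_n\}_{n=1}^\infty$ be a pseudo-dual sequence of $\{f_n\}$ which is a Bessel sequence. Then $\{g_n\}$ is a pseudo-frame.
   Context: A Bessel sequence in $\mathcal{H}$ is called a pseudo-frame if it becomes a frame for $\mathcal{H}$ after adding finitely many appropriate vectors of $\mathcal{H}$ to it. A sequence $\{g_n\}$ in $\mathcal{H}$ is a pseudo-dual sequence of the Bessel sequence $\{f_n\}$ if $f=\sum_{n=1}^\infty\langle f,g_n\rangle f_n$ holds for every $f$ belonging to some finite-codimensional subspace of $\mathcal{H}$. *)

(* Defs.v *)
From mathcomp Require Import all_boot all_algebra.
From mathcomp Require Import all_classical all_reals all_analysis.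
From mathcomp Require Export complex.
Set Implicit Arguments.
Unset Strict Implicit.
Unset Printing Implicit Defensive.
Import GRing.Theory Num.Theory numFieldNormedType.Exports.
Local Open Scope ring_scope.
Local Open Scope classical_set_scope.

Section Hilbert.
Variables (R : realType) (H : lmodType R[i]) (ip : H -> H -> R[i]).

Definition is_inner_product : Prop :=
  [/\ (forall (a : R[i]) (x y z : H), ip (a *: x + y) z = a * ip x z + ip y z),
      (forall x y : H, ip x y = conjc (ip y x)),
      (forall x : H, 0 <= complex.Re (ip x x))
    & (forall x : H, ip x x = 0 -> x = 0)].

Definition ipnorm (x : H) : R := Num.sqrt (complex.Re (ip x x)).

Definition ip_complete : Prop :=
  forall u : nat -> H,
    (forall e : R, 0 < e -> exists N, forall m n, (N <= m)%N -> (N <= n)%N ->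
         ipnorm (u m - u n) < e) ->
    exists l : H, (fun n => ipnorm (u n - l)) @ \oo --> (0 : R).

Definition hilbert_space : Prop := is_inner_product /\ ip_complete.

Definition ip_separable : Prop :=
  exists d : nat -> H, forall (x : H) (e : R), 0 < e -> exists n, ipnorm (x - d n) < e.

Definition sqmod (z : R[i]) : R := complex.Re z ^+ 2 + complex.Im z ^+ 2.

Definition frame_sum (f : nat -> H) (x : H) : \bar R :=
  (\sum_(0 <= n <oo) (sqmod (ip x (f n)))%:E)%E.

Definition bessel (f : nat -> H) : Prop :=
  exists2 B : R, 0 < B &
    forall x : H, (frame_sum f x <= (B * ipnorm x ^+ 2)%:E)%E.

Definition frame (f : nat -> H) : Prop :=
  exists A B : R, [/\ 0 < A, 0 < B &
    forall x : H, ((A * ipnorm x ^+ 2)%:E <= frame_sum f x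
                   <= (B * ipnorm x ^+ 2)%:E)%E].

Definition add_vectors (hs : seq H) (f : nat -> H) : nat -> H :=
  fun n => if (n < size hs)%N then nth 0 hs n else f (n - size hs)%N.

Definition pseudo_frame (f : nat -> H) : Prop :=
  bessel f /\ exists hs : seq H, frame (add_vectors hs f).

Definition subspace (M : set H) : Prop :=
  M 0 /\ forall (a : R[i]) (x y : H), M x -> M y -> M (a *: x + y).

(* finite codimension: H = M + span{v_1,...,v_k} for finitely many v_i *)
Definition finite_codim (M : set H) : Prop :=
  exists (k : nat) (v : 'I_k -> H), forall x : H,
    exists2 m : H, M m & exists c : 'I_k -> R[i], x = m + \sum_(i < k) c i *: v i.

Definition pseudo_dual (f g : nat -> H) : Prop :=
  exists M : set H, [/\ subspace M, finite_codim M &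
    forall x : H, M x ->
      (fun N => ipnorm (x - \sum_(n < N) ip x (g n) *: f n)) @ \oo --> (0 : R)].

End Hilbert.

(* Main.v *)
Require Import Defs.
From mathcomp Require Import all_boot all_order all_algebra.
From mathcomp Require Import all_classical all_reals all_analysis.
From mathcomp Require Import complex.
From mathcomp.algebra_tactics Require Import ring lra.
Import GRing.Theory Num.Theory Order.TTheory numFieldNormedType.Exports.
Set Implicit Arguments.
Unset Strict Implicit.
Unset Printing Implicit Defensive.
Local Open Scope ring_scope.
Local Open Scope classical_set_scope.

Section Scal.
Variable R : realType.
Implicit Types (z w : R[i]) (a b : R).

Definition nm z : R := Num.sqrt (complex.Re z ^+ 2 + complex.Im z ^+ 2).

Lemma nmE z : `|z| = (nm z)%:C%C.
Proof. exact: normc_def. Qed.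

Lemma nm_ge0 z : 0 <= nm z.
Proof. exact: sqrtr_ge0. Qed.

Lemma sqmodE z : sqmod z = nm z ^+ 2.
Proof. by rewrite /nm sqr_sqrtr // addr_ge0 // sqr_ge0. Qed.

Lemma nmM z w : nm (z * w) = nm z * nm w.
Proof. by apply: complexI; rewrite rmorphM /= -!nmE normrM. Qed.

Lemma nmD z w : nm (z + w) <= nm z + nm w.
Proof. by rewrite -lecR rmorphD /= -!nmE ler_normD. Qed.

Lemma nmJ z : nm (conjc z) = nm z.
Proof. by apply: complexI; rewrite -!nmE normcJ. Qed.

Lemma nmR a : nm (a%:C%C) = `|a|.
Proof. by rewrite /nm /= expr0n /= addr0 sqrtr_sqr. Qed.

Lemma nm0 : nm 0 = 0.
Proof. by rewrite (_ : 0 = 0%:C%C) // nmR normr0. Qed.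

Lemma nmN z : nm (- z) = nm z.
Proof. by apply: complexI; rewrite -!nmE normrN. Qed.

Lemma nmB z w : nm (z - w) = nm (w - z).
Proof. by rewrite -nmN opprB. Qed.

Lemma Re_le_nm z : complex.Re z <= nm z.
Proof.
apply: le_trans (ler_norm _) _.
by rewrite -lecR -nmE normc_ge_Re.
Qed.

Lemma nm_sum (I : Type) (r : seq I) (P : pred I) (F : I -> R[i]) :
  nm (\sum_(i <- r | P i) F i) <= \sum_(i <- r | P i) nm (F i).
Proof.
rewrite -lecR -nmE rmorph_sum /=.
apply: le_trans (ler_norm_sum _ _ _) _.
by rewrite le_eqVlt; apply/orP; left; apply/eqP/eq_bigr => i _; rewrite nmE.
Qed.

End Scal.

Section IP.
Variables (R : realType) (H : lmodType R[i]) (ip : H -> H -> R[i]).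
Hypothesis hip : is_inner_product ip.
Local Notation nx := (ipnorm ip).

Lemma ipDZl (a : R[i]) x y z : ip (a *: x + y) z = a * ip x z + ip y z.
Proof. by case: hip. Qed.

Lemma ipC x y : ip x y = conjc (ip y x).
Proof. by case: hip. Qed.

Lemma ip0l z : ip 0 z = 0.
Proof.
have := ipDZl 1 0 0 z; rewrite scale1r addr0 mul1r => /eqP.
by rewrite -subr_eq subrr eq_sym => /eqP.
Qed.

Lemma ipDl x y z : ip (x + y) z = ip x z + ip y z.
Proof. by rewrite -(scale1r x) ipDZl mul1r scale1r. Qed.

Lemma ipZl (a : R[i]) x z : ip (a *: x) z = a * ip x z.
Proof. by rewrite -(addr0 (a *: x)) ipDZl ip0l addr0. Qed.

Lemma ipNl x z : ip (- x) z = - ip x z.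
Proof. by rewrite -scaleN1r ipZl mulN1r. Qed.

Lemma ipBl x y z : ip (x - y) z = ip x z - ip y z.
Proof. by rewrite ipDl ipNl. Qed.

Lemma ip_suml (I : Type) (r : seq I) (P : pred I) (F : I -> H) z :
  ip (\sum_(i <- r | P i) F i) z = \sum_(i <- r | P i) ip (F i) z.
Proof.
apply: (big_morph (fun x => ip x z)); last exact: ip0l.
by move=> x y; exact: ipDl.
Qed.

Lemma ip0r z : ip z 0 = 0.
Proof. by rewrite ipC ip0l rmorph0. Qed.

Lemma ipDr x y z : ip x (y + z) = ip x y + ip x z.
Proof. by rewrite ipC ipDl rmorphD /= -!ipC. Qed.

Lemma ipZr (a : R[i]) x z : ip x (a *: z) = conjc a * ip x z.
Proof. by rewrite ipC ipZl rmorphM /= -ipC. Qed.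

Lemma ipNr x z : ip x (- z) = - ip x z.
Proof. by rewrite ipC ipNl rmorphN /= -ipC. Qed.

Lemma ipBr x y z : ip x (y - z) = ip x y - ip x z.
Proof. by rewrite ipDr ipNr. Qed.

Lemma ipxx x : ip x x = ((nx x) ^+ 2)%:C%C.
Proof.
have h0 : 0 <= complex.Re (ip x x) by case: hip.
rewrite /ipnorm sqr_sqrtr //.
have := ipC x x; case: (ip x x) => a b /= [] hb.
have -> : b = 0 by lra.
by [].
Qed.

Lemma nx_ge0 x : 0 <= nx x.
Proof. exact: sqrtr_ge0. Qed.

Lemma nx_eq0 x : nx x = 0 -> x = 0.
Proof.
move=> h; case: hip => _ _ _; apply; by rewrite ipxx h expr0n.
Qed.

Lemma nx0 : nx 0 = 0.
Proof. by rewrite /ipnorm ip0l /= sqrtr0. Qed.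

Lemma nxZ (a : R[i]) x : nx (a *: x) = nm a * nx x.
Proof.
apply: (@pexpIrn _ 2) => //; rewrite ?nnegrE ?mulr_ge0 ?nm_ge0 ?nx_ge0 //.
apply: complexI; rewrite -ipxx ipZl ipZr mulrA ipxx exprMn rmorphM /=.
by rewrite -sqr_normc nmE rmorphM /= !rmorphXn /= expr2.
Qed.

Lemma nxN x : nx (- x) = nx x.
Proof. by rewrite -scaleN1r nxZ nmN (_ : 1 = 1%:C%C) // nmR normr1 mul1r. Qed.

Lemma nxB x y : nx (x - y) = nx (y - x).
Proof. by rewrite -nxN opprB. Qed.

End IP.

Section IP2.
Variables (R : realType) (H : lmodType R[i]) (ip : H -> H -> R[i]).
Hypothesis hip : is_inner_product ip.
Local Notation nx := (ipnorm ip).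

Lemma nx_gt0 y : y != 0 -> 0 < nx y.
Proof.
move=> yn0; rewrite lt_def nx_ge0 andbT; apply/eqP => h.
by move: yn0; rewrite (nx_eq0 hip h) eqxx.
Qed.

Lemma conjcM (z w : R[i]) : conjc (z * w) = conjc z * conjc w.
Proof. by case: z w => [a b] [c d]; apply/eqP; rewrite eq_complex /=; apply/andP; split; apply/eqP; ring. Qed.

Lemma conjcVR (b : R) : conjc ((b%:C%C)^-1) = (b%:C%C)^-1.
Proof. by apply/eqP; rewrite eq_complex /= !mul0r !oppr0 !eqxx. Qed.

Lemma rdivC (c b : R) : (c / b)%:C%C = c%:C%C / b%:C%C.
Proof. by rewrite rmorphM /= fmorphV. Qed.

Lemma CS x y : nm (ip x y) <= nx x * nx y.
Proof.
case: (eqVneq y 0) => [->|yn0]; first by rewrite (ip0r hip) nm0 mulr_ge0 ?nx_ge0.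
have ny := nx_gt0 yn0.
set C := ip x y; set b := nx y ^+ 2.
have b0 : 0 < b by rewrite exprn_gt0.
have hb : b%:C%C != 0 by rewrite -(rmorph0 (real_complex R)) (inj_eq (@complexI R)) gt_eqF.
pose t := C / b%:C%C.
have hC : C * conjc C = (nm C ^+ 2)%:C%C by rewrite -sqr_normc nmE rmorphXn.
have key : (nx (x - t *: y) ^+ 2)%:C%C = (nx x ^+2 - nm C ^+ 2 / b)%:C%C.
  rewrite rmorphB /= rdivC -hC.
  rewrite -!(ipxx hip) (ipBl hip) !(ipBr hip) !(ipZl hip) !(ipZr hip).
  rewrite (ipxx hip y) -/b (ipC hip y x) -/C /t conjcM conjcVR.
  by field.
move/(@complexI R): key => key.
have h1 : nm C ^+ 2 / b <= nx x ^+ 2.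
  by rewrite -subr_ge0 -key sqr_ge0.
rewrite ler_pdivrMr // in h1.
rewrite -(@ler_pXn2r _ 2) // ?nnegrE ?nm_ge0 ?mulr_ge0 ?nx_ge0 //.
by rewrite exprMn.
Qed.

Lemma nxD x y : nx (x + y) <= nx x + nx y.
Proof.
rewrite -(@ler_pXn2r _ 2) // ?nnegrE ?addr_ge0 ?nx_ge0 //.
have h : (nx (x + y) ^+ 2)%:C%C = (nx x ^+ 2)%:C%C + (ip x y + conjc (ip x y)) + (nx y ^+ 2)%:C%C.
  by rewrite -!(ipxx hip) (ipDl hip) !(ipDr hip) (ipC hip y x); ring.
have h2 : ip x y + conjc (ip x y) = (2 * complex.Re (ip x y))%:C%C.
  by case: (ip x y) => p q; apply/eqP; rewrite eq_complex /=; apply/andP; split; apply/eqP; ring.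
rewrite h2 -!rmorphD /= in h; move/(@complexI R): h => ->.
have := Re_le_nm (ip x y); have := CS x y; rewrite sqrrD; nra.
Qed.

Lemma nx_ipB x x' y : nm (ip x y - ip x' y) <= nx (x - x') * nx y.
Proof. by rewrite -(ipBl hip) CS. Qed.

Lemma nm_ipC x y : nm (ip x y) = nm (ip y x).
Proof. by rewrite (ipC hip) nmJ. Qed.

End IP2.

Section Fin.
Variable R : realType.

Lemma rCS n (a b : nat -> R) :
  (\sum_(i < n) a i * b i) ^+ 2 <= (\sum_(i < n) a i ^+ 2) * (\sum_(i < n) b i ^+ 2).
Proof.
set A := \sum_(i < n) a i ^+ 2; set B := \sum_(i < n) b i ^+ 2.
set S := \sum_(i < n) a i * b i.
have A0 : 0 <= A by apply: sumr_ge0 => i _; exact: sqr_ge0.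
have B0 : 0 <= B by apply: sumr_ge0 => i _; exact: sqr_ge0.
have quad t : 0 <= t ^+ 2 * A + 2 * t * S + B.
  have -> : t ^+ 2 * A + 2 * t * S + B = \sum_(i < n) (t * a i + b i) ^+ 2.
    rewrite /A /S /B !mulr_sumr -!big_split /=; apply: eq_bigr => i _; ring.
  by apply: sumr_ge0 => i _; exact: sqr_ge0.
case: (eqVneq A 0) => [hA|hA].
  have ha : forall i : 'I_n, a i = 0.
    move=> i; apply/eqP; rewrite -sqrf_eq0; apply/eqP.
    by move/eqP: hA; rewrite psumr_eq0 => [/allP/(_ i (mem_index_enum _))/implyP/(_ isT)/eqP|j _]; rewrite ?sqr_ge0.
  have -> : S = 0 by rewrite /S big1 // => i _; rewrite ha mul0r.
  by rewrite expr0n /= mulr_ge0.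
have Ap : 0 < A by rewrite lt_def hA A0.
have := quad (- S / A).
have -> : (- S / A) ^+ 2 * A + 2 * (- S / A) * S + B = B - S ^+ 2 / A.
  by field; rewrite hA.
rewrite subr_ge0 ler_pdivrMr // => h.
by rewrite mulrC.
Qed.

Lemma cCS n (a c : nat -> R[i]) :
  nm (\sum_(i < n) a i * c i) <=
  Num.sqrt (\sum_(i < n) nm (a i) ^+ 2) * Num.sqrt (\sum_(i < n) nm (c i) ^+ 2).
Proof.
apply: le_trans (nm_sum _ _ (fun i : 'I_n => a i * c i)) _.
rewrite -(@ler_pXn2r _ 2) // ?nnegrE ?mulr_ge0 ?sqrtr_ge0 //; last first.
  by apply: sumr_ge0 => i _; exact: nm_ge0.
rewrite exprMn !sqr_sqrtr; first last.
- by apply: sumr_ge0 => i _; exact: sqr_ge0.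
- by apply: sumr_ge0 => i _; exact: sqr_ge0.
under eq_bigr do rewrite nmM.
exact: (rCS n (fun i => nm (a i)) (fun i => nm (c i))).
Qed.

End Fin.

Section Bes.
Variables (R : realType) (H : lmodType R[i]) (ip : H -> H -> R[i]).
Hypothesis hip : is_inner_product ip.
Local Notation nx := (ipnorm ip).

Definition besselB (f : nat -> H) (B : R) :=
  0 < B /\ forall x, (frame_sum ip f x <= (B * nx x ^+ 2)%:E)%E.

Lemma bessel_part f B : besselB f B ->
  forall x N, \sum_(i < N) nm (ip x (f i)) ^+ 2 <= B * nx x ^+ 2.
Proof.
move=> [_ hB] x N; rewrite -lee_fin; apply: le_trans (hB x).
rewrite /frame_sum.
have := @nneseries_lim_ge R (fun n => (sqmod (ip x (f n)))%:E) xpredT 0 N.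
rewrite big_mkord -sumEFin.
under eq_bigr do rewrite sqmodE.
apply => n _ _; rewrite lee_fin sqmodE; exact: sqr_ge0.
Qed.

Lemma bessel_off f B : besselB f B ->
  forall x m n, \sum_(i < n) nm (ip x (f (m + i)%N)) ^+ 2 <= B * nx x ^+ 2.
Proof.
move=> hB x m n; apply: le_trans (bessel_part hB x (m + n)).
rewrite big_split_ord /= lerDr; apply: sumr_ge0 => i _; exact: sqr_ge0.
Qed.

Lemma KL f B : besselB f B -> forall m n (a : nat -> R[i]) y,
  nm (\sum_(i < n) a i * ip (f (m + i)%N) y) <=
  Num.sqrt (\sum_(i < n) nm (a i) ^+ 2) * (Num.sqrt B * nx y).
Proof.
move=> hB m n a y.
apply: le_trans (cCS n a (fun i => ip (f (m + i)%N) y)) _.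
apply: ler_wpM2l; first exact: sqrtr_ge0.
rewrite -(ger0_norm (nx_ge0 ip y)) -sqrtr_sqr -sqrtrM; last by case: hB => /ltW.
rewrite ler_sqrt; last by rewrite mulr_ge0 ?sqr_ge0 //; case: hB => /ltW.
under eq_bigr do rewrite (nm_ipC hip).
exact: bessel_off.
Qed.

Lemma FVB f B : besselB f B -> forall m n (a : nat -> R[i]),
  nx (\sum_(i < n) a i *: f (m + i)%N) <=
  Num.sqrt (\sum_(i < n) nm (a i) ^+ 2) * Num.sqrt B.
Proof.
move=> hB m n a; set u := \sum_(i < n) _.
set c := _ * _.
have c0 : 0 <= c by rewrite mulr_ge0 ?sqrtr_ge0.
have h : nx u ^+ 2 <= c * nx u.
  have -> : nx u ^+ 2 = complex.Re (ip u u) by rewrite (ipxx hip).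
  apply: le_trans (Re_le_nm _) _.
  rewrite {1}/u (ip_suml hip).
  under eq_bigr do rewrite (ipZl hip).
  by rewrite /c -mulrA; exact: KL.
case: (eqVneq (nx u) 0) => [->//|hu].
have up : 0 < nx u by rewrite lt_def hu nx_ge0.
by rewrite expr2 ler_pM2r in h.
Qed.

End Bes.

Lemma cvg0_epsN (R : realType) (a : nat -> R) : a @ \oo --> (0 : R) ->
  forall e, 0 < e -> exists N, forall n, (N <= n)%N -> `|a n| < e.
Proof.
move=> /cvgr0Pnorm_lt h e e0; have [N _ HN] := h e e0.
by exists N => n Nn; exact: HN.
Qed.

Lemma tail_small (R : realType) (b : nat -> R) (C : R) :
  (forall n, 0 <= b n) -> (forall N, \sum_(i < N) b i <= C) ->
  forall e, 0 < e -> exists N0, forall m n, (N0 <= m)%N -> \sum_(i < n) b (m + i)%N < e.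
Proof.
move=> b0 hC e e0.
pose s N := \sum_(i < N) b i.
have hsplit m n : s (m + n)%N = s m + \sum_(i < n) b (m + i)%N by rewrite /s big_split_ord.
have mono m n : (m <= n)%N -> s m <= s n.
  move=> mn; rewrite -(subnKC mn) hsplit lerDl; exact: sumr_ge0.
have hs : has_sup (range s).
  split; first by exists (s 0%N), 0%N.
  by exists C => _ [N _ <-]; exact: hC.
have [_ [N0 _ <-] hN0] := sup_adherent e0 hs.
exists N0 => m n hm.
have h1 : s (m + n)%N <= sup (range s) by apply: ub_le_sup; [case: hs | exists (m + n)%N].
have h2 := mono _ _ hm.
have := hsplit m n; lra.
Qed.

Section Conv.
Variables (R : realType) (H : lmodType R[i]) (ip : H -> H -> R[i]).
Hypothesis hip : is_inner_product ip.
Local Notation nx := (ipnorm ip).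

Lemma Sconv f Bf (hf : besselB ip f Bf) (hc : ip_complete ip) (a : nat -> R[i]) C :
  (forall N, \sum_(i < N) nm (a i) ^+ 2 <= C) ->
  exists l, forall e, 0 < e -> exists N0, forall N, (N0 <= N)%N ->
     nx (\sum_(n < N) a n *: f n - l) < e.
Proof.
move=> hC.
pose u N := \sum_(n < N) a n *: f n.
have Bf0 : 0 < Bf by case: hf.
have cauchy : forall e : R, 0 < e -> exists N, forall m n, (N <= m)%N -> (N <= n)%N ->
         nx (u m - u n) < e.
  move=> e e0.
  have [N0 hN0] := tail_small (fun n => sqr_ge0 (nm (a n))) hC (divr_gt0 (mulr_gt0 e0 e0) Bf0).
  exists N0.
  have key m n : (N0 <= m)%N -> (m <= n)%N -> nx (u n - u m) < e.
    move=> hm mn.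
    have -> : u n - u m = \sum_(i < n - m) a (m + i)%N *: f (m + i)%N.
      move: (n - m)%N (subnKC mn) => k <-.
      by rewrite /u big_split_ord /= addrAC subrr add0r.
    apply: le_lt_trans (FVB hip hf m (n - m) (fun i => a (m + i)%N)) _.
    rewrite -sqrtrM; last by apply: sumr_ge0 => i _; exact: sqr_ge0.
    rewrite -(ger0_norm (ltW e0)) -sqrtr_sqr ltr_sqrt; last by rewrite exprn_gt0.
    have := hN0 m (n - m)%N hm; rewrite ltr_pdivlMr //.
  move=> m n hm hn; case: (leqP m n) => mn.
    by rewrite (nxB hip); exact: (key m n hm mn).
  exact: (key n m hn (ltnW mn)).
have [l hl] := hc u cauchy.
exists l => e e0; have [N hN] := cvg0_epsN hl e0.
exists N => n hn; have := hN n hn; rewrite ger0_norm //; exact: nx_ge0.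
Qed.

End Conv.

Section GS.
Variables (R : realType) (H : lmodType R[i]) (ip : H -> H -> R[i]).
Hypothesis hip : is_inner_product ip.
Local Notation nx := (ipnorm ip).

Definition orthon (mm : nat) (e : nat -> H) :=
  forall i j, (i < mm)%N -> (j < mm)%N -> ip (e i) (e j) = (i == j)%:R.

Definition expanded mm (e : nat -> H) w := w = \sum_(j < mm) ip w (e j) *: e j.

Lemma orthon_pick mm e (a : nat -> R[i]) j : orthon mm e -> (j < mm)%N ->
  \sum_(l < mm) a l * ip (e l) (e j) = a j.
Proof.
move=> ho hj; rewrite (bigD1 (Ordinal hj)) //= big1 ?addr0.
  by rewrite ho // eqxx mulr1.
move=> l hl; rewrite ho // (_ : (l == j :> nat) = false) ?mulr0 //.
by apply/negbTE; move: hl; apply: contra => /eqP h; apply/eqP/val_inj.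
Qed.

Lemma conjcR (b : R) : conjc (b%:C%C) = b%:C%C.
Proof. exact: conjc_real. Qed.

Lemma GS k (z : 'I_k -> H) : exists mm e, orthon mm e /\ forall i, expanded mm e (z i).
Proof.
elim: k z => [|k IH] z.
  by exists 0%N, (fun _ => 0); split => [i j //|[]].
have [mm [e [ho hex]]] := IH (fun i => z (lift ord0 i)).
set z0 := z ord0.
set w := z0 - \sum_(j < mm) ip z0 (e j) *: e j.
have wj j : (j < mm)%N -> ip w (e j) = 0.
  move=> hj; rewrite /w (ipBl hip) (ip_suml hip).
  under eq_bigr do rewrite (ipZl hip).
  by rewrite (orthon_pick (fun l => ip z0 (e l)) ho hj) subrr.
have jw j : (j < mm)%N -> ip (e j) w = 0.
  by move=> hj; rewrite (ipC hip) wj // conjc0.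
have old u : expanded mm e u -> ip u w = 0.
  move=> ->; rewrite (ip_suml hip) big1 // => j _; rewrite (ipZl hip) jw ?mulr0 //.
case: (eqVneq w 0) => [w0|wn0].
  exists mm, e; split => // i; case: (unliftP ord0 i) => [j ->|->]; first exact: hex.
  by rewrite /expanded -/z0; apply/eqP; rewrite -subr_eq0 -/w w0.
have nw := nx_gt0 hip wn0.
pose s := ((nx w)^-1)%:C%C.
pose en := s *: w.
pose e' := fun n => if n == mm then en else e n.
have e'E j : (j < mm)%N -> e' j = e j.
  by move=> hj; rewrite /e' ifF //; apply/negbTE; rewrite neq_ltn hj.
have e'm : e' mm = en by rewrite /e' eqxx.
have ipww : ip w w = ((nx w) ^+ 2)%:C%C by rewrite (ipxx hip).
have hs : s * s * ((nx w) ^+ 2)%:C%C = 1.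
  rewrite /s -!rmorphM /= -(rmorph1 (real_complex R)); congr (_%:C%C).
  by field; rewrite gt_eqF.
have enen : ip en en = 1.
  by rewrite /en (ipZl hip) (ipZr hip) conjcR ipww mulrA.
have sum' u : \sum_(j < mm.+1) ip u (e' j) *: e' j =
   \sum_(j < mm) ip u (e j) *: e j + ip u en *: en.
  rewrite big_ord_recr /= e'm; congr (_ + _); apply: eq_bigr => j _.
  by rewrite e'E.
exists mm.+1, e'; split.
  move=> i j; rewrite !ltnS [(i <= mm)%N]leq_eqVlt [(j <= mm)%N]leq_eqVlt => /orP[/eqP ->|hi] /orP[/eqP ->|hj].
  - by rewrite e'm enen eqxx.
  - rewrite e'm e'E // /en (ipZl hip) wj ?mulr0 //.
    by rewrite (_ : (mm == j) = false) //; apply/negbTE; rewrite neq_ltn hj orbT.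
  - rewrite e'm e'E // /en (ipZr hip) jw ?mulr0 //.
    by rewrite (_ : (i == mm) = false) //; apply/negbTE; rewrite neq_ltn hi.
  - by rewrite !e'E // ho.
move=> i; rewrite /expanded sum'.
case: (unliftP ord0 i) => [j ->|->].
  have := hex j => /= hj.
  by rewrite /en (ipZr hip) old // mulr0 scale0r addr0.
rewrite -/z0 /en (ipZr hip) conjcR.
have -> : ip z0 w = ((nx w) ^+ 2)%:C%C.
  rewrite -ipww {1}(_ : z0 = w + \sum_(j < mm) ip z0 (e j) *: e j); last by rewrite /w subrK.
  rewrite (ipDl hip) (ip_suml hip) big1 ?addr0 // => j _.
  by rewrite (ipZl hip) jw ?mulr0.
rewrite scalerA mulrAC hs scale1r.
by rewrite /w addrC subrK.
Qed.

End GS.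

Definition ev (Q : nat -> Prop) := exists N0, forall N, (N0 <= N)%N -> Q N.

Lemma ev_forall k (Q : 'I_k -> nat -> Prop) :
  (forall i, ev (Q i)) -> ev (fun N => forall i, Q i N).
Proof.
move=> h; have [N0 hN0] := choice h.
exists (\max_(i < k) N0 i) => N hN i; apply: hN0.
by apply: leq_trans hN; exact: (leq_bigmax_cond i).
Qed.

Lemma ev_and (Q1 Q2 : nat -> Prop) : ev Q1 -> ev Q2 -> ev (fun N => Q1 N /\ Q2 N).
Proof.
move=> [N1 h1] [N2 h2]; exists (maxn N1 N2) => N hN; split.
  by apply: h1; apply: leq_trans hN; exact: leq_maxl.
by apply: h2; apply: leq_trans hN; exact: leq_maxr.
Qed.

Section PS.
Variables (R : realType) (H : lmodType R[i]) (ip : H -> H -> R[i]).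
Hypothesis hip : is_inner_product ip.
Local Notation nx := (ipnorm ip).
Variables (f g : nat -> H).

Definition P N x y := \sum_(n < N) ip x (g n) * ip (f n) y.

Lemma P_lin N a u w y : P N (a *: u + w) y = a * P N u y + P N w y.
Proof.
rewrite /P mulr_sumr -big_split; apply: eq_bigr => n _; by rewrite (ipDZl hip) mulrDl mulrA.
Qed.

Lemma P0 N y : P N 0 y = 0.
Proof. by rewrite /P big1 // => n _; rewrite (ip0l hip) mul0r. Qed.

Lemma PD N u w y : P N (u + w) y = P N u y + P N w y.
Proof. by have := P_lin N 1 u w y; rewrite scale1r mul1r. Qed.

Lemma P_sum N k (c : 'I_k -> R[i]) (v : 'I_k -> H) y :
  P N (\sum_i c i *: v i) y = \sum_i c i * P N (v i) y.
Proof.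
apply: (big_ind2 (fun u s => P N u y = s)); first exact: P0.
  by move=> a b c0 d h1 h2; rewrite PD h1 h2.
by move=> i _; rewrite -(addr0 (c i *: v i)) P_lin P0 addr0.
Qed.

Lemma P_ip N x y : ip (\sum_(n < N) ip x (g n) *: f n) y = P N x y.
Proof. by rewrite (ip_suml hip); apply: eq_bigr => n _; rewrite (ipZl hip). Qed.

Lemma lim_P x l :
  (forall e, 0 < e -> ev (fun N => nx (\sum_(n < N) ip x (g n) *: f n - l) < e)) ->
  forall y e, 0 < e -> ev (fun N => nm (P N x y - ip l y) < e).
Proof.
move=> h y e e0.
have ny0 : 0 < nx y + 1 by rewrite ltr_wpDl ?nx_ge0.
have [N0 hN0] := h _ (divr_gt0 e0 ny0).
exists N0 => N hN; rewrite -P_ip.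
apply: le_lt_trans (nx_ipB hip _ _ _) _.
have := hN0 N hN; rewrite ltr_pdivlMr // => h1.
apply: le_lt_trans h1; apply: ler_wpM2l; first exact: nx_ge0.
by rewrite lerDl.
Qed.

Lemma P_bound Bf (hf : besselB ip f Bf) N x y :
  nm (P N x y) <= Num.sqrt (\sum_(n < N) nm (ip x (g n)) ^+ 2) * (Num.sqrt Bf * nx y).
Proof. exact: (KL hip hf 0 N (fun n => ip x (g n)) y). Qed.

Lemma P_bound2 Bf Bg (hf : besselB ip f Bf) (hg : besselB ip g Bg) N x y :
  nm (P N x y) <= Num.sqrt Bg * nx x * (Num.sqrt Bf * nx y).
Proof.
apply: le_trans (P_bound hf N x y) _.
apply: ler_wpM2r; first by rewrite mulr_ge0 ?sqrtr_ge0 ?nx_ge0.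
rewrite -(ger0_norm (nx_ge0 ip x)) -sqrtr_sqr -sqrtrM; last by case: hg => /ltW.
rewrite ler_sqrt; last by rewrite mulr_ge0 ?sqr_ge0 //; case: hg => /ltW.
exact: bessel_part.
Qed.

End PS.

Section Ser.
Variable R : realType.

Lemma series_ge (u : nat -> R) N : (forall n, 0 <= u n) ->
  ((\sum_(i < N) u i)%:E <= \sum_(0 <= n <oo) (u n)%:E)%E.
Proof.
move=> u0.
have := @nneseries_lim_ge R (fun n => (u n)%:E) xpredT 0 N.
rewrite big_mkord -sumEFin; apply => n _ _; rewrite lee_fin; exact: u0.
Qed.

Lemma series_le (u : nat -> R) c : (forall n, 0 <= u n) ->
  (forall N, \sum_(i < N) u i <= c) -> (\sum_(0 <= n <oo) (u n)%:E <= c%:E)%E.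
Proof.
move=> u0 hc.
have h : forall n, (0 <= n)%N -> xpredT n -> (0 <= (u n)%:E)%E by move=> n _ _; rewrite lee_fin.
move/ereal_nondecreasing_series/ereal_nondecreasing_cvgn/cvg_lim: h => ->.
apply: ub_ereal_sup => _ [n _ <-].
by rewrite big_mkord sumEFin lee_fin; exact: hc.
exact: ereal_hausdorff.
Qed.

End Ser.

Section AddV.
Variables (R : realType) (H : lmodType R[i]) (ip : H -> H -> R[i]).

Lemma add_partial (e : nat -> H) (m : nat) (g : nat -> H) x N :
  \sum_(n < m + N) sqmod (ip x (add_vectors (mkseq e m) g n)) =
  \sum_(j < m) nm (ip x (e j)) ^+ 2 + \sum_(n < N) nm (ip x (g n)) ^+ 2.
Proof.
rewrite big_split_ord /=; congr (_ + _); apply: eq_bigr => i _.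
  by rewrite /add_vectors size_mkseq ltn_ord nth_mkseq // sqmodE.
by rewrite /add_vectors size_mkseq ltnNge leq_addr /= addKn sqmodE.
Qed.

End AddV.

Theorem mainTheorem2 (R : realType) (H : lmodType R[i]) (ip : H -> H -> R[i])
    (hH : hilbert_space ip) (hsep : ip_separable ip) (f g : nat -> H) :
  pseudo_frame ip f -> pseudo_dual ip f g -> bessel ip g -> pseudo_frame ip g.
Proof.
move=> [[Bf Bf0 hBf] _] [M [_ [k [v hv]] hMc]] [Bg Bg0 hBg].
case: hH => hip hc.
have hf : besselB ip f Bf by split.
have hg : besselB ip g Bg by split.
split; first by exists Bg.
have hS : forall i : 'I_k, exists l, forall e, 0 < e ->
    ev (fun N => ipnorm ip (\sum_(n < N) ip (v i) (g n) *: f n - l) < e).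
  move=> i; have [l hl] := @Sconv _ _ _ hip _ _ hf hc (fun n => ip (v i) (g n)) _ (bessel_part hg (v i)).
  by exists l.
have [Sv hSv] := choice hS.
pose z i := v i - Sv i.
have [mm [es [ho hex]]] := GS hip z.
exists (mkseq es mm).
have nes : forall j, (j < mm)%N -> ipnorm ip (es j) = 1.
  move=> j hj; have := ho j j hj hj; rewrite eqxx (ipxx hip) -(rmorph1 (real_complex R)).
  move/(@complexI R) => h1.
  apply: (@pexpIrn _ 2) => //; rewrite ?nnegrE ?nx_ge0 //.
  by rewrite h1 expr1n.
pose K := 1 + Num.sqrt Bg * Num.sqrt Bf.
pose c0 := Num.sqrt Bf + mm%:R * K.
pose cc := c0 + 1.
have K0 : 0 <= K by rewrite addr_ge0 ?mulr_ge0 ?sqrtr_ge0.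
have c00 : 0 <= c0 by rewrite addr_ge0 ?mulr_ge0 ?sqrtr_ge0.
have cc0 : 0 < cc by rewrite ltr_wpDl.
exists (cc ^-2), (mm%:R + Bg); split.
- by rewrite invr_gt0 exprn_gt0.
- by rewrite ltr_wpDl.
move=> x.
have [mx hmx [c hxc]] := hv x.
pose r := \sum_i c i *: z i.
have sZ : forall (u : 'I_k -> H) y, ip (\sum_i c i *: u i) y = \sum_i c i * ip (u i) y.
  by move=> u y; rewrite (ip_suml hip); apply: eq_bigr => i _; rewrite (ipZl hip).
have hlim : forall y e, 0 < e ->
    ev (fun N => nm (ip x y - P ip f g N x y - ip r y) < e).
  move=> y e e0.
  set Sc := \sum_i nm (c i).
  have Sc0 : 0 <= Sc by apply: sumr_ge0 => i _; exact: nm_ge0.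
  have e1 : 0 < e / 2 by rewrite divr_gt0.
  have e2 : 0 < e / (2 * (Sc + 1)) by rewrite divr_gt0 // mulr_gt0 // ltr_wpDl.
  have hm : ev (fun N => nm (P ip f g N mx y - ip mx y) < e / 2).
    apply: (lim_P hip) e1 => e' e'0.
    have [N0 hN0] := cvg0_epsN (hMc mx hmx) e'0.
    exists N0 => N hN; move: (hN0 N hN).
    by rewrite ger0_norm ?nx_ge0 // (nxB hip).
  have hvi : ev (fun N => forall i, nm (P ip f g N (v i) y - ip (Sv i) y) < e / (2 * (Sc + 1))).
    apply: ev_forall => i; exact: (lim_P hip (hSv i)).
  have [N0 hN0] := ev_and hm hvi.
  exists N0 => N hN; have [h1 h2] := hN0 N hN.
  have heq : \sum_i c i * (ip (Sv i) y - P ip f g N (v i) y) =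
      \sum_i c i * ip (v i) y - \sum_i c i * P ip f g N (v i) y - \sum_i c i * ip (z i) y.
    by rewrite -!sumrB; apply: eq_bigr => i _; rewrite /z (ipBl hip); ring.
  have -> : ip x y - P ip f g N x y - ip r y =
      (ip mx y - P ip f g N mx y) + \sum_i c i * (ip (Sv i) y - P ip f g N (v i) y).
    rewrite heq hxc (ipDl hip) sZ (PD hip) (P_sum hip) /r sZ; ring.
  apply: le_lt_trans (nmD _ _) _.
  have h3 : nm (\sum_i c i * (ip (Sv i) y - P ip f g N (v i) y)) <= Sc * (e / (2 * (Sc + 1))).
    apply: le_trans (nm_sum _ _ _) _; rewrite /Sc mulr_suml; apply: ler_sum => i _.
    rewrite nmM; apply: ler_wpM2l; first exact: nm_ge0.
    by rewrite nmB; exact: ltW (h2 i).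
  have h4 : Sc * (e / (2 * (Sc + 1))) < e / 2.
    rewrite mulrA ltr_pdivrMr ?mulr_gt0 ?ltr_wpDl //.
    have -> : e / 2 * (2 * (Sc + 1)) = e * Sc + e by field.
    by rewrite mulrC ltrDl.
  rewrite nmB; lra.
have rb : forall y, nm (ip r y) <= K * ipnorm ip x * ipnorm ip y.
  move=> y; apply/ler_addgt0Pr => e e0.
  have [N0 hN0] := hlim y e e0; have h := hN0 N0 (leqnn _).
  have t1 : nm (ip r y) <= nm (ip x y) + nm (P ip f g N0 x y) +
                           nm (ip x y - P ip f g N0 x y - ip r y).
    have e3 : ip r y = ip x y - P ip f g N0 x y - (ip x y - P ip f g N0 x y - ip r y) by ring.
    rewrite {1}e3.
    apply: le_trans (nmD _ _) _; rewrite nmN lerD2r.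
    by apply: le_trans (nmD _ _) _; rewrite nmN.
  have t2 := CS hip x y; have t3 := P_bound2 hip hf hg N0 x y.
  have -> : K * ipnorm ip x * ipnorm ip y = ipnorm ip x * ipnorm ip y +
      Num.sqrt Bg * ipnorm ip x * (Num.sqrt Bf * ipnorm ip y) by rewrite /K; ring.
  lra.
have ipr : forall j, ip r (es j) = \sum_i c i * ip (z i) (es j) by move=> j; exact: sZ.
have rex : r = \sum_(j < mm) ip r (es j) *: es j.
  transitivity (\sum_i \sum_(j < mm) (c i * ip (z i) (es j)) *: es j).
    rewrite /r; apply: eq_bigr => i _; rewrite {1}(hex i : z i = _) scaler_sumr.
    by apply: eq_bigr => j _; rewrite scalerA.
  rewrite exchange_big; apply: eq_bigr => j _.
  by rewrite ipr scaler_suml.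
pose W := \sum_(j < mm) nm (ip x (es j)) ^+ 2.
pose G N := \sum_(n < N) nm (ip x (g n)) ^+ 2.
pose Fs n := sqmod (ip x (add_vectors (mkseq es mm) g n)).
have hFs0 : forall n, 0 <= Fs n by move=> n; rewrite /Fs sqmodE sqr_ge0.
have hpart : forall N, \sum_(n < mm + N) Fs n = W + G N by move=> N; exact: add_partial.
have W0 : 0 <= W by apply: sumr_ge0 => j _; exact: sqr_ge0.
have hW : W <= mm%:R * ipnorm ip x ^+ 2.
  apply: le_trans (_ : \sum_(j < mm) ipnorm ip x ^+ 2 <= _); last first.
    by rewrite sumr_const card_ord mulr_natl.
  apply: ler_sum => j _.
  have := CS hip x (es j); rewrite nes // mulr1 => hj.
  by rewrite -(@ler_pXn2r _ 2) // in hj; rewrite ?nnegrE ?nm_ge0 ?nx_ge0.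
have upper : (frame_sum ip (add_vectors (mkseq es mm) g) x <= ((mm%:R + Bg) * ipnorm ip x ^+ 2)%:E)%E.
  rewrite /frame_sum; apply: series_le => // N.
  apply: (@le_trans _ _ (\sum_(n < mm + N) Fs n)).
    by rewrite addnC big_split_ord /= lerDl; apply: sumr_ge0 => i _.
  by rewrite hpart mulrDl; apply: lerD => //; exact: bessel_part.
set T := frame_sum ip (add_vectors (mkseq es mm) g) x in upper *.
have T0 : (0 <= T)%E.
  by apply: le_trans (series_ge 0 hFs0); rewrite big_ord0 lee_fin.
have Tfin : T \is a fin_num.
  by rewrite ge0_fin_numE //; apply: le_lt_trans upper _; exact: ltey.
set t := fine T.
have Tt : T = t%:E by rewrite /t fineK.
have tW : forall N, W + G N <= t.
  by move=> N; rewrite -lee_fin -Tt -hpart; exact: series_ge.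
have t0 : 0 <= t by apply: le_trans (tW 0%N); rewrite /G big_ord0 addr0.
have sW : forall j, (j < mm)%N -> nm (ip x (es j)) <= Num.sqrt t.
  move=> j hj; rewrite -(ger0_norm (nm_ge0 (ip x (es j)))) -sqrtr_sqr ler_sqrt //.
  apply: le_trans (tW 0%N); rewrite /G big_ord0 addr0 /W.
  rewrite (bigD1 (Ordinal hj)) //= lerDl; apply: sumr_ge0 => i _; exact: sqr_ge0.
have sG : forall N, Num.sqrt (G N) <= Num.sqrt t.
  move=> N; rewrite ler_sqrt //; apply: le_trans (tW N); lra.
have hmain : ipnorm ip x ^+ 2 <= c0 * ipnorm ip x * Num.sqrt t.
  apply/ler_addgt0Pr => e e0.
  have [N0 hN0] := hlim x e e0; have h := hN0 N0 (leqnn _).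
  have a1 : ipnorm ip x ^+ 2 <= nm (ip x x).
    by apply: le_trans (Re_le_nm _); rewrite (ipxx hip).
  have a2 : nm (ip x x) <= nm (P ip f g N0 x x) + nm (ip r x) +
                          nm (ip x x - P ip f g N0 x x - ip r x).
    have e3 : ip x x = P ip f g N0 x x + ip r x + (ip x x - P ip f g N0 x x - ip r x) by ring.
    rewrite {1}e3; apply: le_trans (nmD _ _) _; rewrite lerD2r; exact: nmD.
  have a3 : nm (P ip f g N0 x x) <= Num.sqrt t * (Num.sqrt Bf * ipnorm ip x).
    apply: le_trans (@P_bound _ _ _ hip f g _ hf N0 x x) _.
    by apply: ler_wpM2r; [rewrite mulr_ge0 ?sqrtr_ge0 ?nx_ge0 | exact: sG].
  have a4 : nm (ip r x) <= mm%:R * (K * ipnorm ip x * Num.sqrt t).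
    rewrite {1}rex (ip_suml hip); apply: le_trans (nm_sum _ _ _) _.
    apply: le_trans (_ : \sum_(j < mm) K * ipnorm ip x * Num.sqrt t <= _); last first.
      by rewrite sumr_const card_ord mulr_natl.
    apply: ler_sum => j _; rewrite (ipZl hip) nmM.
    apply: ler_pM; rewrite ?nm_ge0 //.
      by apply: le_trans (rb _) _; rewrite nes // mulr1.
    by rewrite (nm_ipC hip); exact: sW.
  have -> : c0 * ipnorm ip x * Num.sqrt t = Num.sqrt t * (Num.sqrt Bf * ipnorm ip x) +
      mm%:R * (K * ipnorm ip x * Num.sqrt t) by rewrite /c0; ring.
  lra.
apply/andP; split; last by [].
rewrite Tt lee_fin.
case: (eqVneq (ipnorm ip x) 0) => [->|xn0].
  by rewrite expr0n /= mulr0.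
have xp : 0 < ipnorm ip x by rewrite lt_def xn0 nx_ge0.
have h1 : ipnorm ip x <= cc * Num.sqrt t.
  have h2 : ipnorm ip x <= c0 * Num.sqrt t.
    by rewrite expr2 -mulrA (mulrCA c0) ler_pM2l // in hmain.
  apply: le_trans h2 _; apply: ler_wpM2r; first exact: sqrtr_ge0.
  by rewrite lerDl.
have h3 : ipnorm ip x ^+ 2 <= cc ^+ 2 * t.
  have : ipnorm ip x ^+ 2 <= (cc * Num.sqrt t) ^+ 2.
    by rewrite ler_pXn2r // ?nnegrE ?nx_ge0 ?mulr_ge0 ?sqrtr_ge0 ?ltW.
  move=> h4; rewrite exprMn in h4; rewrite (sqr_sqrtr t0) in h4; exact: h4.
have cc2 : 0 < cc ^+ 2 by rewrite exprn_gt0.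
rewrite -(ler_pM2l cc2) mulrA mulfV ?mul1r //.
by rewrite gt_eqF.
Qed.
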